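(* Let $b\ge 1$ be an integer and let $a_1<a_2<\dots<a_l$ be integers with $l\ge 2$ such that $a_{i+1}-a_i\le b$ for all $1\le i<l$. Set $A=\{a_1,\dots,a_l\}$. Then for every integer $n>2b^2$, \[ nA=\bigcup_{1\le k<l}\Big((n-2b^2)\{a_k,a_{k+1}\}+2b^2A\Big). \]
   Context: For a subset $A$ of an abelian group and a positive integer $n$, $nA=A+A+\dots+A$ ($n$ summands) denotes the $n$-fold sumset $\{c_1+\dots+c_n : c_i\in A\}$ (repetitions allowed); sums of sets are Minkowski sums $X+Y=\{x+y: x\in X, y\in Y\}$. *)

(* Defs.v *)
From Stdlib Require Import ZArith.
Open Scope Z_scope.

Definition zset := Z -> Prop.

Definition sumset (X Y : zset) : zset :=
  fun z => exists x y, X x /\ Y y /\ z = x + y.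

Fixpoint nfold (n : nat) (A : zset) : zset :=
  match n with
  | O => fun z => z = 0
  | S O => A
  | S m => sumset (nfold m A) A
  end.

(* The set {a_0, ..., a_(l-1)} of a finite sequence a indexed by 0..l-1 *)
Definition setOf (l : nat) (a : nat -> Z) : zset :=
  fun z => exists i, (i < l)%nat /\ z = a i.

Definition pair2 (x y : Z) : zset := fun z => z = x \/ z = y.

(* Main.v *)
Require Import Defs.
From Stdlib Require Import ZArith Lia List Permutation Classical.
Import ListNotations.
Open Scope Z_scope.

Definition sumf {X : Type} (f : X -> Z) (l : list X) : Z :=
  fold_right (fun x acc => f x + acc) 0 l.

Lemma sumf_app {X} (f : X -> Z) l1 l2 : sumf f (l1 ++ l2) = sumf f l1 + sumf f l2.
Proof. induction l1; simpl; [lia|]. unfold sumf in *; simpl; rewrite IHl1; lia. Qed.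

Lemma sumf_perm {X} (f : X -> Z) l1 l2 : Permutation l1 l2 -> sumf f l1 = sumf f l2.
Proof. induction 1; unfold sumf in *; simpl in *; lia. Qed.

Lemma sumf_map {X Y} (f : Y -> Z) (g : X -> Y) l : sumf f (map g l) = sumf (fun x => f (g x)) l.
Proof. induction l; simpl; auto. unfold sumf in *; simpl; rewrite IHl; lia. Qed.

Lemma sumf_shift_eq {X} (F G : X -> Z) c l :
  Forall (fun x => F x = G x + c) l -> sumf F l = sumf G l + Z.of_nat (length l) * c.
Proof. induction 1; [simpl; lia|]. change (length (x :: l)) with (S (length l)). unfold sumf in *; cbn [fold_right] in *; rewrite Nat2Z.inj_succ; nia. Qed.

Lemma sumf_shift_le {X} (F G : X -> Z) c l :
  Forall (fun x => F x <= G x + c) l -> sumf F l <= sumf G l + Z.of_nat (length l) * c.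
Proof. induction 1; [simpl; lia|]. change (length (x :: l)) with (S (length l)). unfold sumf in *; cbn [fold_right] in *; rewrite Nat2Z.inj_succ; nia. Qed.

Lemma perm_filter {X} (f : X -> bool) l :
  Permutation l (filter f l ++ filter (fun x => negb (f x)) l).
Proof.
  induction l as [|x l IH]; simpl; auto.
  destruct (f x); simpl.
  - constructor; auto.
  - apply Permutation_cons_app; auto.
Qed.

Lemma filter_filter_imp {X} (f g : X -> bool) l :
  (forall x, f x = true -> g x = true) -> filter f (filter g l) = filter f l.
Proof.
  intros H; induction l as [|x l IH]; simpl; auto.
  destruct (g x) eqn:E; simpl.
  - destruct (f x); rewrite IH; auto.
  - destruct (f x) eqn:E2; [rewrite H in E; auto; discriminate|auto].
Qed.

Lemma filter_filter_len {X} (f g : X -> bool) l :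
  (length (filter f (filter g l)) <= length (filter f l))%nat.
Proof.
  induction l as [|x l IH]; simpl; auto.
  destruct (g x); simpl; destruct (f x); simpl; lia.
Qed.

Lemma pigeon {X : Type} (p : X -> Z) (b : nat) : forall V L,
  (forall x, In x L -> 1 <= p x <= Z.of_nat V) ->
  (forall v, (1 <= v <= V)%nat -> (length (filter (fun x => (p x =? Z.of_nat v)%Z) L) < b)%nat) ->
  (length L <= V * (b - 1))%nat.
Proof.
  induction V as [|V IH]; intros L H1 H2.
  - destruct L as [|x L]; simpl; auto. specialize (H1 x (or_introl eq_refl)). lia.
  - pose proof (filter_length (fun x => p x =? Z.of_nat (S V)) L) as E.
    pose proof (H2 (S V) ltac:(lia)) as HA.
    assert (HB : (length (filter (fun x => negb (p x =? Z.of_nat (S V))%Z) L) <= V * (b-1))%nat).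
    { apply IH.
      - intros x Hx. apply filter_In in Hx as [Hx Hn]. specialize (H1 x Hx).
        apply Bool.negb_true_iff, Z.eqb_neq in Hn. lia.
      - intros v Hv. eapply Nat.le_lt_trans; [apply filter_filter_len|]. apply H2; lia. }
    rewrite Nat.mul_succ_l. lia.
Qed.

Lemma pigeon_ex {X : Type} (p : X -> Z) (b : nat) L :
  (forall x, In x L -> 1 <= p x <= Z.of_nat b) ->
  (b * (b - 1) < length L)%nat ->
  exists v, (1 <= v <= b)%nat /\ (b <= length (filter (fun x => (p x =? Z.of_nat v)%Z) L))%nat.
Proof.
  intros H1 H2. destruct (classic (exists v, (1 <= v <= b)%nat /\ (b <= length (filter (fun x => (p x =? Z.of_nat v)%Z) L))%nat)) as [H|H]; auto.
  exfalso. assert (length L <= b * (b-1))%nat; [|lia].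
  apply (pigeon p); auto. intros v Hv.
  destruct (Nat.lt_ge_cases (length (filter (fun x => (p x =? Z.of_nat v)%Z) L)) b); auto.
  exfalso; apply H; eauto.
Qed.

Lemma nfold_list (X : zset) n z :
  nfold n X z <-> exists xs, length xs = n /\ Forall X xs /\ z = sumf (fun x => x) xs.
Proof.
  revert z; induction n as [|n IH]; intros z.
  - simpl. split.
    + intros ->. exists []. simpl; auto.
    + intros [xs [H1 [_ H3]]]. destruct xs; simpl in *; [auto|discriminate].
  - destruct n as [|n].
    + simpl. split.
      * intros H. exists [z]. simpl. split; auto. split; auto. lia.
      * intros [xs [H1 [H2 H3]]]. destruct xs as [|x [|y xs]]; simpl in *; try discriminate.
        inversion H2; subst. unfold sumf; simpl. replace (x+0) with x by lia; auto.
    + change (nfold (S (S n)) X z) with (sumset (nfold (S n) X) X z).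
      unfold sumset. split.
      * intros [x [y [Hx [Hy ->]]]]. apply IH in Hx as [xs [H1 [H2 H3]]].
        exists (y :: xs). simpl. split; [lia|]. split; auto.
        unfold sumf in *; simpl. lia.
      * intros [xs [H1 [H2 H3]]]. destruct xs as [|y xs]; simpl in *; try discriminate.
        inversion H2; subst. exists (sumf (fun x => x) xs), y. split.
        { apply IH. exists xs. auto. }
        split; auto. unfold sumf; simpl. lia.
Qed.

Definition Phi (a : nat -> Z) (js : list nat) := sumf (fun i => a i * a i) js.

Lemma in_firstn_ {X} (x : X) n l : In x (firstn n l) -> In x l.
Proof. intros H. rewrite <- (firstn_skipn n l). apply in_or_app; auto. Qed.

Lemma exchange (l b : nat) (a : nat -> Z) (hb : (1 <= b)%nat)
  (hinc : forall i, (i + 1 < l)%nat -> a i < a (i + 1)%nat)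
  (hgap : forall i, (i + 1 < l)%nat -> a (i + 1)%nat - a i <= Z.of_nat b)
  (mono : forall i j, (i < j)%nat -> (j < l)%nat -> a i < a j)
  js m : Forall (fun i => (i < l)%nat) js -> (m < l)%nat ->
  (b*(b-1) < length (filter (fun i => Nat.ltb i m) js))%nat ->
  (b*(b-1) < length (filter (fun i => Nat.ltb m i) js))%nat ->
  exists js', Forall (fun i => (i < l)%nat) js' /\ length js' = length js /\
    sumf a js' = sumf a js /\ Phi a js' < Phi a js.
Proof.
  intros Hjs Hm HL HH.
  pose (L := filter (fun i => Nat.ltb i m) js).
  assert (HpL: forall x, In x L -> 1 <= a (S x) - a x <= Z.of_nat b).
  { intros x Hx; apply filter_In in Hx as [Hx1 Hx2]; apply Nat.ltb_lt in Hx2.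
    pose proof (hinc x ltac:(lia)); pose proof (hgap x ltac:(lia)).
    rewrite Nat.add_1_r in *. lia. }
  destruct (pigeon_ex (fun x => a (S x) - a x) b L HpL HL) as [v [Hv HFv]].
  pose (H := filter (fun i => Nat.ltb m i) js).
  assert (HqH: forall x, In x H -> 1 <= a x - a (pred x) <= Z.of_nat b).
  { intros x Hx; apply filter_In in Hx as [Hx1 Hx2]; apply Nat.ltb_lt in Hx2.
    rewrite Forall_forall in Hjs. specialize (Hjs x Hx1). destruct x as [|x]; [lia|].
    simpl. pose proof (hinc x ltac:(lia)); pose proof (hgap x ltac:(lia)).
    rewrite Nat.add_1_r in *. lia. }
  destruct (pigeon_ex (fun x => a x - a (pred x)) b H HqH HH) as [w [Hw HGw]].
  pose (Fv := filter (fun x => (a (S x) - a x =? Z.of_nat v)%Z) L).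
  pose (Gw := filter (fun x => (a x - a (pred x) =? Z.of_nat w)%Z) H).
  pose (U := firstn w Fv). pose (D := firstn v Gw).
  assert (HU: Forall (fun i => (i < m)%nat /\ a (S i) = a i + Z.of_nat v) U).
  { apply Forall_forall; intros x Hx. apply in_firstn_ in Hx.
    apply filter_In in Hx as [Hx1 Hx2]. apply filter_In in Hx1 as [_ Hx3].
    apply Nat.ltb_lt in Hx3. apply Z.eqb_eq in Hx2. split; [lia|]. lia. }
  assert (HD: Forall (fun j => (m < j)%nat /\ (j < l)%nat /\ a (pred j) = a j - Z.of_nat w) D).
  { apply Forall_forall; intros x Hx. apply in_firstn_ in Hx.
    apply filter_In in Hx as [Hx1 Hx2]. apply filter_In in Hx1 as [Hx0 Hx3].
    apply Nat.ltb_lt in Hx3. apply Z.eqb_eq in Hx2.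
    rewrite Forall_forall in Hjs. specialize (Hjs x Hx0). lia. }
  assert (HlU : length U = w) by (apply firstn_length_le; fold Fv in HFv; lia).
  assert (HlD : length D = v) by (apply firstn_length_le; fold Gw in HGw; lia).
  pose (N := filter (fun x => negb (Nat.ltb m x)) js).
  pose (R0 := filter (fun x => negb (Nat.ltb x m)) N).
  pose (X := skipn v Gw ++ filter (fun x => negb (a x - a (pred x) =? Z.of_nat w)%Z) H).
  pose (Y := skipn w Fv ++ filter (fun x => negb (a (S x) - a x =? Z.of_nat v)%Z) L).
  assert (HP : Permutation js ((D ++ X) ++ (U ++ Y) ++ R0)).
  { eapply perm_trans; [apply (perm_filter (fun i => Nat.ltb m i))|].
    apply Permutation_app.
    - eapply perm_trans; [apply (perm_filter (fun x => (a x - a (pred x) =? Z.of_nat w)%Z) H)|].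
      unfold X, D. rewrite app_assoc, firstn_skipn. apply Permutation_refl.
    - fold N. eapply perm_trans; [apply (perm_filter (fun i => Nat.ltb i m) N)|].
      apply Permutation_app; [|apply Permutation_refl].
      assert (E : filter (fun i => Nat.ltb i m) N = L).
      { unfold N, L. apply filter_filter_imp. intros x Hx. apply Nat.ltb_lt in Hx.
        apply Bool.negb_true_iff, Nat.ltb_ge. lia. }
      rewrite E.
      eapply perm_trans; [apply (perm_filter (fun x => (a (S x) - a x =? Z.of_nat v)%Z) L)|].
      unfold Y, U. rewrite app_assoc, firstn_skipn. apply Permutation_refl. }
  assert (HF : Forall (fun i => (i < l)%nat) ((D ++ X) ++ (U ++ Y) ++ R0)).
  { rewrite Forall_forall in *. intros x Hx. apply Hjs.
    eapply Permutation_in; [apply Permutation_sym, HP|exact Hx]. }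
  exists ((map pred D ++ X) ++ (map S U ++ Y) ++ R0).
  rewrite !Forall_app in HF. destruct HF as [[HF1 HF2] [[HF3 HF4] HF5]].
  split; [|split; [|split]].
  - rewrite !Forall_app. repeat split; auto.
    + rewrite Forall_forall in *. intros x Hx. apply in_map_iff in Hx as [y [<- Hy]].
      specialize (HD y Hy). lia.
    + rewrite Forall_forall in *. intros x Hx. apply in_map_iff in Hx as [y [<- Hy]].
      specialize (HU y Hy). lia.
  - rewrite (Permutation_length HP). rewrite !length_app, !length_map. lia.
  - rewrite (sumf_perm _ _ _ HP). rewrite !sumf_app, !sumf_map.
    rewrite (sumf_shift_eq (fun x => a (pred x)) a (- Z.of_nat w) D).
    2:{ eapply Forall_impl; [|exact HD]. simpl; intros; lia. }
    rewrite (sumf_shift_eq (fun x => a (S x)) a (Z.of_nat v) U).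
    2:{ eapply Forall_impl; [|exact HU]. simpl; intros; lia. }
    rewrite HlU, HlD. nia.
  - unfold Phi. rewrite (sumf_perm _ _ _ HP). rewrite !sumf_app, !sumf_map.
    pose proof (sumf_shift_le (fun x => a (pred x) * a (pred x)) (fun i => a i * a i)
                  (- (Z.of_nat w * (2 * a m + 1))) D) as E1.
    pose proof (sumf_shift_le (fun x => a (S x) * a (S x)) (fun i => a i * a i)
                  (Z.of_nat v * (2 * a m - 1)) U) as E2.
    cbv beta in E1, E2.
    assert (A1 : sumf (fun x => a (pred x) * a (pred x)) D <=
              sumf (fun i => a i * a i) D + Z.of_nat (length D) * - (Z.of_nat w * (2 * a m + 1))).
    { apply E1. eapply Forall_impl; [|exact HD]. cbv beta; intros j [Hj1 [Hj2 Hj3]].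
      assert (a m <= a (pred j)).
      { destruct (Nat.eq_dec m (pred j)) as [<-|]; [lia|]. pose proof (mono m (pred j)); lia. }
      rewrite Hj3 in *. assert (1 <= Z.of_nat w) by lia.
      assert (0 <= Z.of_nat w * (a j - Z.of_nat w - a m)) by (apply Z.mul_nonneg_nonneg; lia).
      assert (0 <= Z.of_nat w * (Z.of_nat w - 1)) by (apply Z.mul_nonneg_nonneg; lia). nia. }
    assert (A2 : sumf (fun x => a (S x) * a (S x)) U <=
              sumf (fun i => a i * a i) U + Z.of_nat (length U) * (Z.of_nat v * (2 * a m - 1))).
    { apply E2. eapply Forall_impl; [|exact HU]. cbv beta; intros i [Hi1 Hi2].
      assert (a (S i) <= a m).
      { destruct (Nat.eq_dec (S i) m) as [->|]; [lia|]. pose proof (mono (S i) m); lia. }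
      rewrite Hi2 in *. assert (1 <= Z.of_nat v) by lia.
      assert (0 <= Z.of_nat v * (a m - a i - Z.of_nat v)) by (apply Z.mul_nonneg_nonneg; lia).
      assert (0 <= Z.of_nat v * (Z.of_nat v - 1)) by (apply Z.mul_nonneg_nonneg; lia). nia. }
    rewrite HlU, HlD in *. nia.
Qed.

Lemma Phi_nonneg a js : 0 <= Phi a js.
Proof. unfold Phi, sumf; induction js; simpl; nia. Qed.

Lemma key (l b : nat) (a : nat -> Z) (hb : (1 <= b)%nat)
  (hinc : forall i, (i + 1 < l)%nat -> a i < a (i + 1)%nat)
  (hgap : forall i, (i + 1 < l)%nat -> a (i + 1)%nat - a i <= Z.of_nat b)
  (mono : forall i j, (i < j)%nat -> (j < l)%nat -> a i < a j) :
  forall N js, (Z.to_nat (Phi a js) < N)%nat -> Forall (fun i => (i < l)%nat) js ->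
  exists ys, Forall (fun i => (i < l)%nat) ys /\ length ys = length js /\
    sumf a ys = sumf a js /\
    forall m, (m < l)%nat ->
      (length (filter (fun i => Nat.ltb i m) ys) <= b*(b-1))%nat \/
      (length (filter (fun i => Nat.ltb m i) ys) <= b*(b-1))%nat.
Proof.
  induction N as [|N IH]; intros js HN Hjs; [lia|].
  destruct (classic (forall m, (m < l)%nat ->
      (length (filter (fun i => Nat.ltb i m) js) <= b*(b-1))%nat \/
      (length (filter (fun i => Nat.ltb m i) js) <= b*(b-1))%nat)) as [Hd|Hd].
  - exists js. auto.
  - apply not_all_ex_not in Hd as [m Hm].
    apply imply_to_and in Hm as [Hm1 Hm2]. apply not_or_and in Hm2 as [H1 H2].
    destruct (exchange l b a hb hinc hgap mono js m Hjs Hm1 ltac:(lia) ltac:(lia))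
      as [js' [F1 [F2 [F3 F4]]]].
    pose proof (Phi_nonneg a js').
    destruct (IH js' ltac:(lia) F1) as [ys [G1 [G2 [G3 G4]]]].
    exists ys. repeat split; auto; congruence.
Qed.

Lemma in_skipn_ {X} (x : X) n l : In x (skipn n l) -> In x l.
Proof. intros H. rewrite <- (firstn_skipn n l). apply in_or_app; auto. Qed.

Lemma filter_lt0 ys : filter (fun i => Nat.ltb i 0) ys = [].
Proof. induction ys; simpl; auto. Qed.

Lemma filter_top l ys : Forall (fun i => (i < l)%nat) ys ->
  length (filter (fun i => Nat.ltb (l - 1) i) ys) = 0%nat.
Proof.
  induction 1; simpl; auto. destruct (Nat.ltb_spec (l-1) x); simpl; lia.
Qed.

Lemma choose_k (l B : nat) ys (hl : (2 <= l)%nat) :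
  Forall (fun i => (i < l)%nat) ys ->
  (forall m, (m < l)%nat ->
      (length (filter (fun i => Nat.ltb i m) ys) <= B)%nat \/
      (length (filter (fun i => Nat.ltb m i) ys) <= B)%nat) ->
  exists k, (k + 1 < l)%nat /\ (length (filter (fun i => Nat.ltb i k) ys) <= B)%nat /\
     (length (filter (fun i => Nat.ltb (S k) i) ys) <= B)%nat.
Proof.
  intros Hys Hd.
  assert (G : forall d t, (t + d = l)%nat -> (t + 1 < l)%nat ->
     (length (filter (fun i => Nat.ltb i t) ys) <= B)%nat ->
     exists k, (k + 1 < l)%nat /\ (length (filter (fun i => Nat.ltb i k) ys) <= B)%nat /\
     (length (filter (fun i => Nat.ltb (S k) i) ys) <= B)%nat).
  { induction d as [|d IH]; intros t Ht Ht1 Hf; [lia|].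
    destruct (le_gt_dec (length (filter (fun i => Nat.ltb (S t) i) ys)) B) as [Hg|Hg].
    - exists t. auto.
    - destruct (Hd (S t) ltac:(lia)) as [Hf'|Hg']; [|lia].
      destruct (Nat.ltb_spec (S t + 1) l).
      + apply (IH (S t)); auto; lia.
      + replace (S t) with (l - 1)%nat in Hg by lia. rewrite filter_top in Hg; auto. lia. }
  apply (G l 0%nat); try lia. rewrite filter_lt0. simpl. lia.
Qed.

Lemma outside_count k ys :
  (length (filter (fun i => negb (Nat.eqb i k || Nat.eqb i (S k))) ys) <=
   length (filter (fun i => Nat.ltb i k) ys) + length (filter (fun i => Nat.ltb (S k) i) ys))%nat.
Proof.
  induction ys as [|i ys IH]; simpl; auto.
  destruct (Nat.eqb_spec i k); destruct (Nat.eqb_spec i (S k));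
  destruct (Nat.ltb_spec i k); destruct (Nat.ltb_spec (S k) i); simpl; lia.
Qed.

Lemma setOf_list l a xs : Forall (setOf l a) xs ->
  exists js, Forall (fun i => (i < l)%nat) js /\ xs = map a js.
Proof.
  induction 1 as [|x xs Hx _ [js [H1 H2]]]; [exists []; auto|].
  destruct Hx as [i [Hi ->]]. exists (i :: js). split; [constructor; auto|]. simpl; congruence.
Qed.

Lemma mono_of l (a : nat -> Z) (hinc : forall i, (i + 1 < l)%nat -> a i < a (i + 1)%nat) :
  forall i j, (i < j)%nat -> (j < l)%nat -> a i < a j.
Proof.
  intros i j; induction j as [|j IH]; intros Hij Hj; [lia|].
  pose proof (hinc j ltac:(lia)) as E. rewrite Nat.add_1_r in E.
  destruct (Nat.eq_dec i j) as [->|]; auto. specialize (IH ltac:(lia) ltac:(lia)). lia.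
Qed.

Theorem mainTheorem2 (b : nat) (l : nat) (a : nat -> Z)
  (hb : (1 <= b)%nat) (hl : (2 <= l)%nat)
  (hinc : forall i, (i + 1 < l)%nat -> a i < a (i + 1)%nat)
  (hgap : forall i, (i + 1 < l)%nat -> a (i + 1)%nat - a i <= Z.of_nat b)
  (n : nat) (hn : (2 * b * b < n)%nat) :
  forall z : Z,
    nfold n (setOf l a) z <->
    exists k, (k + 1 < l)%nat /\
      sumset (nfold (n - 2 * b * b)%nat (pair2 (a k) (a (k + 1)%nat)))
             (nfold (2 * b * b)%nat (setOf l a)) z.
Proof.
  intros z. pose proof (mono_of l a hinc) as mono. split.
  - intros Hz. apply nfold_list in Hz as [xs [Hlen [HX Hz]]].
    destruct (setOf_list l a xs HX) as [js [Hjs ->]].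
    destruct (key l b a hb hinc hgap mono (S (Z.to_nat (Phi a js))) js ltac:(lia) Hjs)
      as [ys [Y1 [Y2 [Y3 Y4]]]].
    destruct (choose_k l (b*(b-1)) ys hl Y1 Y4) as [k [K1 [K2 K3]]].
    pose (pb := fun i => (Nat.eqb i k || Nat.eqb i (S k))%bool).
    pose (P := filter pb ys). pose (Q := filter (fun i => negb (pb i)) ys).
    pose proof (filter_length pb ys) as E. fold P Q in E.
    pose proof (outside_count k ys) as E2. fold pb Q in E2.
    rewrite length_map in Hlen.
    assert (b * (b - 1) <= b * b)%nat by (apply Nat.mul_le_mono_l; lia).
    assert (HQ : (length Q <= 2 * b * b)%nat) by (change Q with (filter (fun i => negb (Nat.eqb i k || Nat.eqb i (S k))) ys); lia).
    pose (M := (2 * b * b)%nat).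
    exists k. split; auto. unfold sumset.
    exists (sumf a (firstn (n - M) P)), (sumf a (skipn (n - M) P ++ Q)).
    split; [|split].
    + apply nfold_list. exists (map a (firstn (n - M) P)). split; [|split].
      * rewrite length_map. apply firstn_length_le. fold M in HQ. lia.
      * apply Forall_forall. intros x Hx. apply in_map_iff in Hx as [i [<- Hi]].
        apply in_firstn_ in Hi. apply filter_In in Hi as [_ Hi]. unfold pb in Hi.
        rewrite Nat.add_1_r. unfold pair2.
        apply Bool.orb_true_iff in Hi as [Hi|Hi]; apply Nat.eqb_eq in Hi; subst; auto.
      * rewrite sumf_map. reflexivity.
    + apply nfold_list. exists (map a (skipn (n - M) P ++ Q)). split; [|split].
      * rewrite length_map, length_app, length_skipn. fold M in HQ. lia.
      * apply Forall_forall. intros x Hx. apply in_map_iff in Hx as [i [<- Hi]].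
        assert (In i ys).
        { apply in_app_or in Hi as [Hi|Hi].
          - apply in_skipn_ in Hi. apply filter_In in Hi; tauto.
          - apply filter_In in Hi; tauto. }
        rewrite Forall_forall in Y1. exists i. split; auto.
      * rewrite sumf_map. reflexivity.
    + rewrite Hz, sumf_map. change (sumf (fun x => a x) js) with (sumf a js).
      rewrite <- Y3. rewrite (sumf_perm a _ _ (perm_filter pb ys)). fold P Q.
      rewrite <- (firstn_skipn (n - M) P) at 1. rewrite !sumf_app. lia.
  - intros [k [Hk [x [y [Hx [Hy ->]]]]]].
    apply nfold_list in Hx as [xs1 [L1 [F1 S1]]].
    apply nfold_list in Hy as [xs2 [L2 [F2 S2]]].
    apply nfold_list. exists (xs1 ++ xs2). split; [|split].
    + rewrite length_app. lia.
    + apply Forall_app. split; auto. eapply Forall_impl; [|exact F1].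
      intros w [->| ->]; [exists k | exists (k+1)%nat]; split; auto; lia.
    + rewrite sumf_app. lia.
Qed.
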